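(* Let $d\ge2$ and $r,s\ge1$ be integers, and $a_1,\dots,a_d,a'_1,\dots,a'_d\in k$. Let $\widetilde X(d,r)\subset\mathbb{A}^3=\mathrm{Spec}\,k[x,y,z]$ be the hypersurface $x^rz+(y^d+a_1xy^{d-1}+\dots+a_{d-1}x^{d-1}y+a_dx^d)=1$ and $\widetilde X'(d,s)$ the hypersurface $x^sz+(y^d+a'_1xy^{d-1}+\dots+a'_{d-1}x^{d-1}y+a'_dx^d)=1$. Let $W(d,r,s)$ be the variety obtained by gluing $d$ copies $\{\omega\}\times\mathbb{A}^3$ ($\omega\in H(d)$) of $\mathbb{A}^3$ with coordinates $(x,c_1,c_2)$ via the identifications, for $x\neq0$, $(\omega,x,c_1,c_2)\sim\left(\lambda,x,\,c_1+\frac{p_\omega(x)-p_\lambda(x)}{x^r},\,c_2+\frac{p'_\omega(x)-p'_\lambda(x)}{x^s}\right)$. Then there are isomorphisms $\widetilde X(d,r)\times\mathbb{A}^1\cong W(d,r,s)\cong\widetilde X'(d,s)\times\mathbb{A}^1$.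
   Context: Work over an algebraically closed field $k$ of characteristic zero. $H(d)$ denotes the group of $d$-th roots of unity in $k$. For $\omega\in H(d)$, $p_\omega(x)\in k[x]$ is the unique polynomial of degree $\le r-1$ with $p_\omega(0)=\omega$ such that there is $q_\omega(x)\in k[x]$ with $x^rq_\omega(x)+p_\omega(x)^d+a_1xp_\omega(x)^{d-1}+\dots+a_{d-1}x^{d-1}p_\omega(x)+a_dx^d=1$; similarly $p'_\omega(x)$ is the unique polynomial of degree $\le s-1$ with $p'_\omega(0)=\omega$ such that $x^s$ divides $1-(p'_\omega(x)^d+a'_1xp'_\omega(x)^{d-1}+\dots+a'_dx^d)$. *)

(* Defs.v *)
From HB Require Import structures.
From mathcomp Require Import all_boot all_order all_algebra.
From mathcomp Require Import mpoly.
Set Implicit Arguments. Unset Strict Implicit. Unset Printing Implicit Defensive.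
Import Order.TTheory GRing.Theory.
Local Open Scope ring_scope.

Definition binform (K : nzRingType) (d : nat) (a : nat -> K) (x y : K) : K :=
  y ^+ d + \sum_(1 <= i < d.+1) a i * x ^+ i * y ^+ (d - i).

Definition inH (K : nzRingType) (d : nat) (w : K) : Prop := w ^+ d = 1.

(* q is "p_omega": deg q <= r-1, q(0) = omega and
   x^r divides 1 - (q^d + a_1 x q^(d-1) + ... + a_d x^d). *)
Definition pspec (K : fieldType) (d r : nat) (a : nat -> K) (w : K)
    (q : {poly K}) : Prop :=
  [/\ (size q <= r)%N, q.[0] = w &
      'X^r %| (1 - (q ^+ d + \sum_(1 <= i < d.+1) a i *: ('X ^+ i * q ^+ (d - i))))].

(* The hypersurface X~(d,r) x A^1 : points (x,y,z,t) with x^r z + F(x,y) = 1. *)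
Definition XA1pt (K : nzRingType) (d r : nat) (a : nat -> K) (v : 'I_4 -> K) : Prop :=
  v (inord 0) ^+ r * v (inord 2) + binform d a (v (inord 0)) (v (inord 1)) = 1.

Definition Wrel (K : fieldType) (r s : nat) (p p' : K -> {poly K})
    (w : K) (c : 'I_3 -> K) (l : K) (c' : 'I_3 -> K) : Prop :=
  (w = l /\ forall i, c i = c' i) \/
  (let x := c (inord 0) in
   [/\ x != 0, c' (inord 0) = x,
       c' (inord 1) = c (inord 1) + ((p w).[x] - (p l).[x]) / x ^+ r &
       c' (inord 2) = c (inord 2) + ((p' w).[x] - (p' l).[x]) / x ^+ s]).

Definition evalv (K : nzRingType) (n m : nat) (F : 'I_m -> {mpoly K[n]})
    (v : 'I_n -> K) : 'I_m -> K := fun i => (F i).@[v].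

(* An isomorphism of varieties W(d,r,s) ~= Y, where Y is the closed subvariety
   of A^4 with point set Ypt:
   - Phi : a morphism W -> Y, given on each chart omega by polynomial maps
     A^3 -> A^4 landing in Y and agreeing on the gluing overlaps;
   - Psi : a morphism Y -> W, given by a finite cover of Y by principal opens
     D(g j) together with, on each D(g j), a regular map
     y |-> N j (y) / g j (y) into the chart w j; these agree modulo the gluing
     on overlaps;
   - the two composites are the identity (on points; all varieties here
     are reduced and k is algebraically closed). *)
Definition W_iso (K : fieldType) (d r s : nat) (p p' : K -> {poly K})
    (Ypt : ('I_4 -> K) -> Prop) : Prop :=
  exists (Phi : K -> 'I_4 -> {mpoly K[3]})
         (J : nat) (g : 'I_J -> {mpoly K[4]}) (w : 'I_J -> K)
         (N : 'I_J -> 'I_3 -> {mpoly K[4]}),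
  let psi j (y : 'I_4 -> K) : 'I_3 -> K := fun i => (N j i).@[y] / (g j).@[y] in
  (
      (forall o c, inH d o -> Ypt (evalv (Phi o) c)) /\
      (forall o l c c', inH d o -> inH d l -> Wrel r s p p' o c l c' ->
        evalv (Phi o) c = evalv (Phi l) c') /\
      (forall j, inH d (w j)) /\
      (forall y, Ypt y -> exists j, (g j).@[y] != 0) /\
      (forall y j j', Ypt y -> (g j).@[y] != 0 -> (g j').@[y] != 0 ->
        Wrel r s p p' (w j) (psi j y) (w j') (psi j' y)) /\
      (forall y j, Ypt y -> (g j).@[y] != 0 -> evalv (Phi (w j)) (psi j y) = y) /\
      (forall o c j, inH d o -> (g j).@[evalv (Phi o) c] != 0 ->
        Wrel r s p p' (w j) (psi j (evalv (Phi o) c)) o c)).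

(* Main.v *)
Require Import Defs.
From HB Require Import structures.
From mathcomp Require Import all_boot all_order all_algebra.
From mathcomp Require Import mpoly.
From mathcomp Require Import ring.
From Stdlib Require Import ClassicalEpsilon FunctionalExtensionality.
Set Implicit Arguments. Unset Strict Implicit. Unset Printing Implicit Defensive.
Import GRing.Theory.
Local Open Scope ring_scope.
Notation funext := functional_extensionality.


Lemma choice_fun (A B : Type) (P : A -> B -> Prop) :
  (forall x, exists y, P x y) -> exists f : A -> B, forall x, P x (f x).
Proof.
move=> H; exists (fun x => proj1_sig (constructive_indefinite_description _ (H x))).
by move=> x; case: (constructive_indefinite_description _ (H x)).
Qed.

Section PF.
Variable K : fieldType.

Inductive expr (n : nat) : Type :=
| EV of 'I_n | EC of K | EA of expr n & expr n | EM of expr n & expr n.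

Fixpoint eval n (e : expr n) (v : 'I_n -> K) : K :=
  match e with
  | EV i => v i | EC c => c
  | EA e1 e2 => eval e1 v + eval e2 v
  | EM e1 e2 => eval e1 v * eval e2 v end.

Fixpoint tomp n (e : expr n) : {mpoly K[n]} :=
  match e with
  | EV i => 'X_i | EC c => c%:MP
  | EA e1 e2 => tomp e1 + tomp e2
  | EM e1 e2 => tomp e1 * tomp e2 end.

Lemma tompE n (e : expr n) v : (tomp e).@[v] = eval e v.
Proof.
elim: e => [i|c|e1 IH1 e2 IH2|e1 IH1 e2 IH2] /=.
- by rewrite mevalXU. - by rewrite mevalC.
- by rewrite mevalD IH1 IH2. - by rewrite mevalM IH1 IH2.
Qed.

Definition polyfn n (f : ('I_n -> K) -> K) := exists e : expr n, forall v, eval e v = f v.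

Section Clos.
Variable n : nat.
Implicit Types f g : ('I_n -> K) -> K.

Lemma pf_ext f g : polyfn f -> (forall v, f v = g v) -> polyfn g.
Proof. by case=> e he hfg; exists e => v; rewrite he hfg. Qed.
Lemma pf_const c : polyfn (fun _ : 'I_n -> K => c). Proof. by exists (EC n c). Qed.
Lemma pf_var (i : 'I_n) : polyfn (fun v => v i). Proof. by exists (EV i). Qed.
Lemma pf_add f g : polyfn f -> polyfn g -> polyfn (fun v => f v + g v).
Proof. by case=> e1 h1 [e2 h2]; exists (EA e1 e2) => v /=; rewrite h1 h2. Qed.
Lemma pf_mul f g : polyfn f -> polyfn g -> polyfn (fun v => f v * g v).
Proof. by case=> e1 h1 [e2 h2]; exists (EM e1 e2) => v /=; rewrite h1 h2. Qed.
Lemma pf_opp f : polyfn f -> polyfn (fun v => - f v).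
Proof. move=> h; apply: pf_ext (pf_mul (pf_const (-1)) h) _ => v; by rewrite mulN1r. Qed.
Lemma pf_sub f g : polyfn f -> polyfn g -> polyfn (fun v => f v - g v).
Proof. by move=> h1 h2; apply: pf_add h1 (pf_opp h2). Qed.
Lemma pf_exp f m : polyfn f -> polyfn (fun v => f v ^+ m).
Proof.
move=> h; elim: m => [|m IH]; first exact: pf_const.
by apply: pf_ext (pf_mul h IH) _ => v; rewrite exprS.
Qed.
Lemma pf_sum (I : Type) (l : seq I) (P : pred I) (F : I -> ('I_n -> K) -> K) :
  (forall i, polyfn (F i)) -> polyfn (fun v => \sum_(i <- l | P i) F i v).
Proof.
move=> h; elim: l => [|i l IH].
  by apply: pf_ext (pf_const 0) _ => v; rewrite big_nil.
case: (boolP (P i)) => Pi.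
  by apply: pf_ext (pf_add (h i) IH) _ => v; rewrite big_cons Pi.
by apply: pf_ext IH _ => v; rewrite big_cons (negbTE Pi).
Qed.
Lemma pf_horner (P : {poly K}) f : polyfn f -> polyfn (fun v => P.[f v]).
Proof.
move=> h; apply: (pf_ext (f := fun v => \sum_(i < size P) P`_i * f v ^+ i)).
  by apply: pf_sum => i; apply: pf_mul (pf_const _) (pf_exp _ h).
by move=> v; rewrite horner_coef.
Qed.
Lemma pf_div f c : polyfn f -> polyfn (fun v => f v / c).
Proof. by move=> h; apply: pf_mul h (pf_const _). Qed.
End Clos.

Fixpoint esub n m (e : expr n) (h : 'I_n -> expr m) : expr m :=
  match e with
  | EV i => h i | EC c => EC m c
  | EA e1 e2 => EA (esub e1 h) (esub e2 h)
  | EM e1 e2 => EM (esub e1 h) (esub e2 h) end.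

Lemma esubE n m (e : expr n) (h : 'I_n -> expr m) v :
  eval (esub e h) v = eval e (fun i => eval (h i) v).
Proof. by elim: e => //= e1 -> e2 ->. Qed.

Lemma pf_comp n m (f : ('I_n -> K) -> K) (h : 'I_n -> ('I_m -> K) -> K) :
  polyfn f -> (forall i, polyfn (h i)) -> polyfn (fun v => f (fun i => h i v)).
Proof.
case=> e he /fin_all_exists [E hE]; exists (esub e E) => v.
rewrite esubE -he; congr eval; apply: funext => i; exact: hE.
Qed.

Lemma pf_homog n m (f : ('I_n -> K) -> K) (B : ('I_m -> K) -> K)
  (N : 'I_n -> ('I_m -> K) -> K) : polyfn f -> polyfn B -> (forall i, polyfn (N i)) ->
  exists M Nf, polyfn Nf /\ forall y, B y != 0 ->
     Nf y = B y ^+ M * f (fun i => N i y / B y).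
Proof.
case=> e he pB pN.
suff [M [Nf [pN' hN]]] : exists M Nf, polyfn Nf /\ forall y, B y != 0 ->
     Nf y = B y ^+ M * eval e (fun i => N i y / B y).
  by exists M, Nf; split => // y /hN ->; rewrite he.
elim: e {he} => [i|c|e1 [M1 [N1 [p1 h1]]] e2 [M2 [N2 [p2 h2]]]|e1 [M1 [N1 [p1 h1]]] e2 [M2 [N2 [p2 h2]]]] /=.
- exists 1%N, (N i); split => // y By; by rewrite expr1 mulrC divfK.
- exists 0%N, (fun _ => c); split; first exact: pf_const.
  by move=> y _; rewrite expr0 mul1r.
- exists (M1 + M2)%N, (fun y => N1 y * B y ^+ M2 + N2 y * B y ^+ M1); split.
    by apply: pf_add; apply: pf_mul => //; apply: pf_exp.
  by move=> y By; rewrite h1 // h2 // exprD; ring.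
- exists (M1 + M2)%N, (fun y => N1 y * N2 y); split; first exact: pf_mul.
  by move=> y By; rewrite h1 // h2 // exprD; ring.
Qed.

Definition upd n (v : 'I_n -> K) (i0 : 'I_n) (t : K) : 'I_n -> K :=
  fun i => if i == i0 then t else v i.

Fixpoint euni n (e : expr n) (i0 : 'I_n) (v : 'I_n -> K) : {poly K} :=
  match e with
  | EV i => if i == i0 then 'X else (v i)%:P
  | EC c => c%:P
  | EA e1 e2 => euni e1 i0 v + euni e2 i0 v
  | EM e1 e2 => euni e1 i0 v * euni e2 i0 v end.

Lemma euniE n (e : expr n) i0 v t : (euni e i0 v).[t] = eval e (upd v i0 t).
Proof.
elim: e => [i|c|e1 IH1 e2 IH2|e1 IH1 e2 IH2] /=.
- by rewrite /upd; case: (i == i0); rewrite ?hornerX ?hornerC.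
- by rewrite hornerC.
- by rewrite hornerD IH1 IH2.
- by rewrite hornerM IH1 IH2.
Qed.

Lemma upd_id n (v : 'I_n -> K) i0 : upd v i0 (v i0) = v.
Proof. by apply: funext => i; rewrite /upd; case: eqP => // ->. Qed.

Hypothesis char0 : [pchar K] =i pred0.

Lemma natr0 (m : nat) : (m%:R == 0 :> K) = (m == 0)%N.
Proof. by move: m; apply/pcharf0P. Qed.

Lemma natr_inj0 (i j : nat) : i%:R = j%:R :> K -> i = j.
Proof.
wlog le : i j / (i <= j)%N => [W|].
  by case/orP: (leq_total i j) => h e; [apply: W|symmetry; apply: W].
move=> e; have : ((j - i)%:R == 0 :> K) by rewrite natrB // e subrr.
rewrite natr0 subn_eq0 => h; apply/eqP; by rewrite eqn_leq le h.
Qed.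

Lemma poly_nz_roots (P : {poly K}) : (forall t, t != 0 -> P.[t] = 0) -> P = 0.
Proof.
move=> h; apply/eqP; apply: contraT => nz.
have := max_poly_roots nz (rs := [seq (i.+1)%:R | i <- iota 0 (size P)]).
rewrite size_map size_iota ltnn; apply.
- apply/allP => t /mapP [i _ ->]; apply/rootP/h.
  by rewrite natr0.
- by rewrite map_inj_uniq ?iota_uniq // => i j /natr_inj0 [].
Qed.

Lemma pf_zero n (f : ('I_n -> K) -> K) i0 :
  polyfn f -> (forall v, v i0 != 0 -> f v = 0) -> forall v, f v = 0.
Proof.
case=> e he h v.
have P0 : euni e i0 v = 0.
  apply: poly_nz_roots => t t0; rewrite euniE he h //.
  by rewrite /upd eqxx.
by rewrite -he -(upd_id v i0) -euniE P0 horner0.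
Qed.

Lemma pf_dl n (f : ('I_n -> K) -> K) i0 : polyfn f ->
  exists g, polyfn g /\ forall v, f v = f (upd v i0 0) + v i0 * g v.
Proof.
case=> e he.
suff [g [pg hg]] : exists g, polyfn g /\ forall v, eval e v = eval e (upd v i0 0) + v i0 * g v.
  by exists g; split => // v; rewrite -!he.
elim: e {he} => [i|c|e1 [g1 [p1 h1]] e2 [g2 [p2 h2]]|e1 [g1 [p1 h1]] e2 [g2 [p2 h2]]] /=.
- case: (eqVneq i i0) => [->|ne].
    exists (fun _ => 1); split; first exact: pf_const.
    by move=> v; rewrite /upd eqxx add0r mulr1.
  exists (fun _ => 0); split; first exact: pf_const.
  by move=> v; rewrite /upd (negbTE ne) mulr0 addr0.
- exists (fun _ => 0); split; first exact: pf_const.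
  by move=> v; rewrite mulr0 addr0.
- exists (fun v => g1 v + g2 v); split; first exact: pf_add.
  by move=> v; rewrite h1 h2 mulrDr; rewrite addrACA.
- exists (fun v => g1 v * eval e2 v + eval e1 (upd v i0 0) * g2 v); split.
    apply: pf_add; apply: pf_mul => //; first by exists e2.
    apply: (pf_comp (f := eval e1) (h := fun i v => upd v i0 0 i)); first by exists e1.
    by move=> i; rewrite /upd; case: (i == i0); [apply: pf_const|apply: pf_var].
  move=> v; rewrite {1}h1 {1}h2.
  set A := eval e1 _; set B := eval e2 _.
  have -> : eval e2 v = B + v i0 * g2 v by rewrite h2.
  ring.
Qed.

Definition divx n (i0 : 'I_n) (m : nat) (f : ('I_n -> K) -> K) :=
  exists g, polyfn g /\ forall v, f v = v i0 ^+ m * g v.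

Section Divx.
Variables (n : nat) (i0 : 'I_n).
Implicit Types f g u : ('I_n -> K) -> K.

Lemma divx_pf m f : divx i0 m f -> polyfn f.
Proof.
case=> g [pg hg]; apply: pf_ext (pf_mul (pf_exp m (pf_var i0)) pg) _ => v.
by rewrite hg.
Qed.

Lemma divx_ext m f g : divx i0 m f -> (forall v, f v = g v) -> divx i0 m g.
Proof. by case=> h [ph hh] e; exists h; split => // v; rewrite -e. Qed.

Lemma divx0 m : divx i0 m (fun _ => 0).
Proof. by exists (fun _ => 0); split; [apply: pf_const|move=> v; rewrite mulr0]. Qed.

Lemma divx_add m f g : divx i0 m f -> divx i0 m g -> divx i0 m (fun v => f v + g v).
Proof.
case=> f1 [p1 h1] [g1 [p2 h2]]; exists (fun v => f1 v + g1 v); split.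
  exact: pf_add. by move=> v; rewrite h1 h2 mulrDr.
Qed.

Lemma divx_mulr m f h : divx i0 m f -> polyfn h -> divx i0 m (fun v => f v * h v).
Proof.
case=> f1 [p1 h1] ph; exists (fun v => f1 v * h v); split.
  exact: pf_mul. by move=> v; rewrite h1 mulrA.
Qed.

Lemma divx_mull m f h : divx i0 m f -> polyfn h -> divx i0 m (fun v => h v * f v).
Proof. by move=> d1 ph; apply: divx_ext (divx_mulr d1 ph) _ => v; rewrite mulrC. Qed.

Lemma divx_opp m f : divx i0 m f -> divx i0 m (fun v => - f v).
Proof.
move=> d1; apply: divx_ext (divx_mulr d1 (pf_const n (-1))) _ => v.
by rewrite mulrN1.
Qed.

Lemma divx_mul m1 m2 f g : divx i0 m1 f -> divx i0 m2 g ->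
  divx i0 (m1 + m2) (fun v => f v * g v).
Proof.
case=> f1 [p1 h1] [g1 [p2 h2]]; exists (fun v => f1 v * g1 v); split.
  exact: pf_mul. by move=> v; rewrite h1 h2 exprD; ring.
Qed.

Lemma divx_exp m f e : divx i0 m f -> divx i0 (m * e) (fun v => f v ^+ e).
Proof.
move=> d1; elim: e => [|e IH].
  by exists (fun _ => 1); split; [apply: pf_const|move=> v; rewrite muln0 !expr0 mulr1].
by rewrite mulnS; apply: divx_ext (divx_mul d1 IH) _ => v; rewrite exprS.
Qed.

Lemma divx_weaken m1 m2 f : (m1 <= m2)%N -> divx i0 m2 f -> divx i0 m1 f.
Proof.
move=> le [g [pg hg]]; exists (fun v => v i0 ^+ (m2 - m1) * g v); split.
  exact: pf_mul (pf_exp _ (pf_var _)) pg.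
by move=> v; rewrite hg mulrA -exprD subnKC.
Qed.

Lemma divx_1pow m u e : divx i0 m u -> divx i0 m (fun v => 1 - (1 - u v) ^+ e).
Proof.
move=> du; have pu := divx_pf du.
elim: e => [|e IH].
  by apply: divx_ext (divx0 m) _ => v; rewrite expr0 subrr.
apply: divx_ext (divx_add IH (divx_mulr du (pf_exp e (pf_sub (pf_const _ 1) pu)))) _.
by move=> v; rewrite exprSr; ring.
Qed.

Lemma divx_vanish f : polyfn f -> (forall v, v i0 = 0 -> f v = 0) -> divx i0 1 f.
Proof.
move=> pf h; case: (pf_dl i0 pf) => g [pg hg]; exists g; split => // v.
by rewrite hg h ?add0r ?expr1 // /upd eqxx.
Qed.

Lemma divx_cancel m f u : polyfn f -> polyfn u ->
  (forall v, v i0 = 0 -> u v != 0) -> divx i0 m (fun v => f v * u v) -> divx i0 m f.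
Proof.
move=> pf pu hu; elim: m f pf => [|m IH] f pf.
  by move=> _; exists f; split => // v; rewrite expr0 mul1r.
case=> g [pg hg].
have f0 : forall v, v i0 = 0 -> f v = 0.
  move=> v v0; have := hg v; rewrite v0 expr0n /= mul0r => /eqP.
  by rewrite mulf_eq0 (negbTE (hu v v0)) orbF => /eqP.
case: (divx_vanish pf f0) => f1 [p1 h1].
have e1 : forall v, f1 v * u v - v i0 ^+ m * g v = 0.
  apply: (pf_zero (i0 := i0)).
    exact: pf_sub (pf_mul p1 pu) (pf_mul (pf_exp _ (pf_var _)) pg).
  move=> v v0; apply/eqP; rewrite subr_eq0; apply/eqP.
  apply: (mulfI v0); rewrite mulrA -[v i0 * f1 v]expr1 -h1 mulrA -exprS -hg.
  done.
have [h [ph hh]] : divx i0 m f1.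
  apply: IH => //; exists g; split => // v; apply/eqP; rewrite -subr_eq0; exact/eqP.
exists h; split => // v; by rewrite h1 hh mulrA -exprD add1n.
Qed.

Lemma divx_sum (I : eqType) (l : seq I) (P : pred I) m (F : I -> ('I_n -> K) -> K) :
  (forall i, i \in l -> P i -> divx i0 m (F i)) ->
  divx i0 m (fun v => \sum_(i <- l | P i) F i v).
Proof.
elim: l => [|i l IH] h.
  by apply: divx_ext (divx0 m) _ => v; rewrite big_nil.
have IH' : divx i0 m (fun v => \sum_(i <- l | P i) F i v).
  by apply: IH => j jl; apply: h; rewrite inE jl orbT.
case: (boolP (P i)) => Pi.
  apply: divx_ext (divx_add (h i _ Pi) IH') _ => [|v]; first by rewrite inE eqxx.
  by rewrite big_cons Pi.
by apply: divx_ext IH' _ => v; rewrite big_cons (negbTE Pi).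
Qed.
End Divx.

End PF.

Section Main.
Variables (K : fieldType) (char0 : [pchar K] =i pred0) (d r s : nat).
Hypotheses (hd : (2 <= d)%N) (hr : (1 <= r)%N) (hs : (1 <= s)%N).
Variables (a : nat -> K) (p p' q : K -> {poly K}) (L : seq K).
Hypotheses (uL : uniq L) (hL : forall w, (w \in L) = (w ^+ d == 1)).
Hypothesis hp0 : forall w, inH d w -> (p w).[0] = w.
Hypothesis hq : forall w, inH d w -> forall x,
  x ^+ r * (q w).[x] = 1 - binform d a x (p w).[x].

Local Notation F := (@binform K d a).

Definition Qf (w x y : K) : K := \sum_(i < d) y ^+ (d.-1 - i) * (p w).[x] ^+ i
  + \sum_(1 <= i < d.+1) a i * x ^+ i * \sum_(j < d - i) y ^+ ((d - i).-1 - j) * (p w).[x] ^+ j.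

Lemma K1 w x y : (y - (p w).[x]) * Qf w x y = F x y - F x (p w).[x].
Proof.
rewrite /Qf /binform mulrDr -subrXX mulr_sumr.
have -> : \sum_(1 <= i < d.+1) (y - (p w).[x]) * (a i * x ^+ i *
     \sum_(j < d - i) y ^+ ((d - i).-1 - j) * (p w).[x] ^+ j) =
   \sum_(1 <= i < d.+1) a i * x ^+ i * y ^+ (d - i) -
   \sum_(1 <= i < d.+1) a i * x ^+ i * (p w).[x] ^+ (d - i).
  rewrite -sumrB; apply: eq_bigr => i _.
  by rewrite mulrCA -subrXX mulrBr.
by set A := \sum_(_ <= _ < _) _; set B := \sum_(_ <= _ < _) _; ring.
Qed.

Lemma inH_nz (w : K) : inH d w -> w != 0.
Proof.
move=> h; apply/eqP => w0; move: h; rewrite /inH w0 expr0n.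
by case: d hd => // n _ /eqP; rewrite eq_sym oner_eq0.
Qed.

Lemma dnz : (d%:R : K) != 0.
Proof. by rewrite natr0 //; case: d hd. Qed.

Lemma Qfw0 w y : Qf w 0 y = \sum_(i < d) y ^+ (d.-1 - i) * (p w).[0] ^+ i.
Proof.
rewrite /Qf [X in _ + X]big_nat_cond [X in _ + X]big1 ?addr0 // => i /andP [/andP [i1 _] _].
by rewrite expr0n eqn0Ngt i1 mulr0 mul0r.
Qed.

Lemma Qfww (w : K) : inH d w -> Qf w 0 w = d%:R * w ^+ d.-1.
Proof.
move=> h; rewrite Qfw0 hp0 //.
rewrite (eq_bigr (fun _ => w ^+ d.-1)) ?sumr_const ?card_ord ?mulr_natl //.
move=> i _; rewrite -exprD subnK //; by case: d hd i => // n _ [i /=]; rewrite ltnS.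
Qed.

Lemma Qfww_nz (w : K) : inH d w -> Qf w 0 w != 0.
Proof. by move=> h; rewrite Qfww // mulf_neq0 ?dnz // expf_neq0 // inH_nz. Qed.

Lemma F0 (y : K) : F 0 y = y ^+ d.
Proof.
rewrite /binform big_nat_cond big1 ?addr0 // => i /andP [/andP [i1 _] _].
by rewrite expr0n eqn0Ngt i1 mulr0 mul0r.
Qed.

Definition Ez (w x y : K) : K := Qf w x y / (d%:R * w ^+ d.-1).
Definition Gz (w x y : K) : K := (1 - (1 - Ez w x y) ^+ s) ^+ s.
Definition Hf (x y : K) : K := \sum_(mu <- L) (p' mu).[x] * Gz mu x y.

Section PFs.
Variable n : nat.
Variables fx fy : ('I_n -> K) -> K.
Hypotheses (px : polyfn fx) (py : polyfn fy).
Lemma pf_F : polyfn (fun v => F (fx v) (fy v)).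
Proof.
rewrite /binform; apply: pf_add; first exact: pf_exp.
apply: pf_sum => i; apply: pf_mul; last exact: pf_exp.
by apply: pf_mul; [apply: pf_const|apply: pf_exp].
Qed.
Lemma pf_Qf w : polyfn (fun v => Qf w (fx v) (fy v)).
Proof.
rewrite /Qf; apply: pf_add.
  by apply: pf_sum => i; apply: pf_mul; apply: pf_exp => //; apply: pf_horner.
apply: pf_sum => i; apply: pf_mul.
  by apply: pf_mul; [apply: pf_const|apply: pf_exp].
by apply: pf_sum => j; apply: pf_mul; apply: pf_exp => //; apply: pf_horner.
Qed.
Lemma pf_Ez w : polyfn (fun v => Ez w (fx v) (fy v)).
Proof. exact: pf_div (pf_Qf w). Qed.
Lemma pf_Gz w : polyfn (fun v => Gz w (fx v) (fy v)).
Proof. by apply: pf_exp; apply: pf_sub (pf_const _ _) (pf_exp _ (pf_sub (pf_const _ _) (pf_Ez w))). Qed.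
Lemma pf_Hf : polyfn (fun v => Hf (fx v) (fy v)).
Proof. by apply: pf_sum => mu; apply: pf_mul (pf_horner _ px) (pf_Gz mu). Qed.
End PFs.

Definition i0 : 'I_3 := inord 0.
Definition i1 : 'I_3 := inord 1.
Definition i2 : 'I_3 := inord 2.
Definition j0 : 'I_4 := inord 0.
Definition j1 : 'I_4 := inord 1.
Definition j2 : 'I_4 := inord 2.
Definition j3 : 'I_4 := inord 3.

Definition mk3 (x y z : K) : 'I_3 -> K := fun i => nth 0 [:: x; y; z] i.
Definition mk4 (x y z t : K) : 'I_4 -> K := fun i => nth 0 [:: x; y; z; t] i.

Lemma mk3_0 x y z : mk3 x y z i0 = x. Proof. by rewrite /mk3 /i0 inordK. Qed.
Lemma mk3_1 x y z : mk3 x y z i1 = y. Proof. by rewrite /mk3 /i1 inordK. Qed.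
Lemma mk3_2 x y z : mk3 x y z i2 = z. Proof. by rewrite /mk3 /i2 inordK. Qed.
Lemma mk4_0 x y z t : mk4 x y z t j0 = x. Proof. by rewrite /mk4 /j0 inordK. Qed.
Lemma mk4_1 x y z t : mk4 x y z t j1 = y. Proof. by rewrite /mk4 /j1 inordK. Qed.
Lemma mk4_2 x y z t : mk4 x y z t j2 = z. Proof. by rewrite /mk4 /j2 inordK. Qed.
Lemma mk4_3 x y z t : mk4 x y z t j3 = t. Proof. by rewrite /mk4 /j3 inordK. Qed.

Lemma ord3 (i : 'I_3) : [\/ i = i0, i = i1 | i = i2].
Proof.
case: i => [[|[|[|m]]] Hm] //; [apply: Or31|apply: Or32|apply: Or33];
  by apply: val_inj; rewrite /= inordK.
Qed.
Lemma ord4 (i : 'I_4) : [\/ i = j0, i = j1, i = j2 | i = j3].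
Proof.
case: i => [[|[|[|[|m]]]] Hm] //; [apply: Or41|apply: Or42|apply: Or43|apply: Or44];
  by apply: val_inj; rewrite /= inordK.
Qed.
Lemma mk3_eta (c : 'I_3 -> K) : c = mk3 (c i0) (c i1) (c i2).
Proof. by apply: funext => i; case: (ord3 i) => ->; rewrite ?mk3_0 ?mk3_1 ?mk3_2. Qed.
Lemma mk4_eta (c : 'I_4 -> K) : c = mk4 (c j0) (c j1) (c j2) (c j3).
Proof. by apply: funext => i; case: (ord4 i) => ->; rewrite ?mk4_0 ?mk4_1 ?mk4_2 ?mk4_3. Qed.
Lemma i02 : i0 != i2. Proof. by rewrite -val_eqE /= !inordK. Qed.
Lemma i12 : i1 != i2. Proof. by rewrite -val_eqE /= !inordK. Qed.

Definition ych w (c : 'I_3 -> K) := (p w).[c i0] + c i0 ^+ r * c i1.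
Definition zch w (c : 'I_3 -> K) := (q w).[c i0] - c i1 * Qf w (c i0) (ych w c).

Lemma K2 (w : K) c : inH d w -> c i0 ^+ r * zch w c + F (c i0) (ych w c) = 1.
Proof.
move=> h; have := K1 w (c i0) (ych w c).
have -> : ych w c - (p w).[c i0] = c i0 ^+ r * c i1 by rewrite /ych addrAC subrr add0r.
move/eqP; rewrite eq_sym subr_eq => /eqP ->.
by rewrite /zch mulrBr hq //; ring.
Qed.


Lemma pf_ych (w : K) : polyfn (ych w).
Proof.
apply: (pf_ext (f := fun c => (p w).[c i0] + c i0 ^+ r * c i1)) => //.
by apply: pf_add; [apply: pf_horner; apply: pf_var|apply: pf_mul; [apply: pf_exp; apply: pf_var|apply: pf_var]].
Qed.
Lemma pf_zch (w : K) : polyfn (zch w).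
Proof.
apply: (pf_ext (f := fun c => (q w).[c i0] - c i1 * Qf w (c i0) (ych w c))) => //.
apply: pf_sub; first by apply: pf_horner; apply: pf_var.
by apply: pf_mul; [apply: pf_var|apply: pf_Qf; [apply: pf_var|apply: pf_ych]].
Qed.

Lemma ych0 (w : K) c : inH d w -> c i0 = 0 -> ych w c = w.
Proof.
by move=> h c0; rewrite /ych c0 hp0 // expr0n; case: r hr => // ? _; rewrite mul0r addr0.
Qed.

Lemma Ez_ww (w : K) : inH d w -> Ez w 0 w = 1.
Proof.
move=> h; rewrite /Ez Qfww // divff //.
by rewrite mulf_neq0 ?dnz // expf_neq0 // inH_nz.
Qed.

Lemma inL (w : K) : w \in L -> inH d w.
Proof. by rewrite hL => /eqP. Qed.

Lemma divx_E1 (w : K) : inH d w -> divx i0 1 (fun c => 1 - Ez w (c i0) (ych w c)).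
Proof.
move=> h; apply: divx_vanish.
  apply: pf_sub; first exact: pf_const.
  exact: (pf_Ez (pf_var _ i0) (pf_ych w) w).
by move=> c c0; rewrite ych0 // c0 Ez_ww // subrr.
Qed.

Lemma divx_Q (mu w : K) : inH d mu -> inH d w -> mu != w ->
  divx i0 r (fun c => Qf mu (c i0) (ych w c)).
Proof.
move=> hmu hw ne.
apply: (@divx_cancel _ char0 _ i0 r _ (fun c => ych w c - (p mu).[c i0])).
- by apply: pf_Qf; [apply: pf_var|apply: pf_ych].
- by apply: pf_sub (pf_ych _) (pf_horner _ (pf_var _ i0)).
- by move=> c c0; rewrite ych0 // c0 hp0 // subr_eq0 eq_sym.
exists (fun c => (q mu).[c i0] - zch w c); split.
  by apply: pf_sub; [apply: pf_horner; apply: pf_var|apply: pf_zch].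
move=> c; rewrite mulrC K1.
have h1 := K2 c hw; have h2 := hq hmu (c i0).
have -> : F (c i0) (p mu).[c i0] = 1 - c i0 ^+ r * (q mu).[c i0] by rewrite h2; ring.
have -> : F (c i0) (ych w c) = 1 - c i0 ^+ r * zch w c by rewrite -h1; ring.
ring.
Qed.

Lemma oneminus (e : K) : 1 - (1 - e) ^+ s = e * \sum_(i < s) (1 - e) ^+ i.
Proof.
have := subrXX 1 (1 - e) s; rewrite expr1n => ->.
have -> : 1 - (1 - e) = e by ring.
by congr (_ * _); apply: eq_bigr => i _; rewrite expr1n mul1r.
Qed.

Lemma divx_Gother (mu w : K) : inH d mu -> inH d w -> mu != w ->
  divx i0 s (fun c => Gz mu (c i0) (ych w c)).
Proof.
move=> hmu hw ne.
have dE : divx i0 r (fun c => Ez mu (c i0) (ych w c)).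
  exact: divx_mulr (divx_Q hmu hw ne) (pf_const _ _).
have pE : polyfn (fun c => Ez mu (c i0) (ych w c)) by apply: pf_Ez; [apply: pf_var|apply: pf_ych].
have dS := divx_mulr dE (pf_sum (index_enum 'I_s) xpredT (F :=
   fun i c => (1 - Ez mu (c i0) (ych w c)) ^+ i) (fun i => pf_exp _ (pf_sub (pf_const _ _) pE))).
apply: divx_weaken (leq_pmull _ hr) _.
apply: divx_ext (divx_exp s dS) _ => c.
by rewrite /Gz oneminus.
Qed.

Lemma divx_Gw (w : K) : inH d w -> divx i0 s (fun c => 1 - Gz w (c i0) (ych w c)).
Proof.
move=> h; rewrite /Gz; apply: divx_1pow.
have := divx_exp s (divx_E1 h); by rewrite mul1n.
Qed.

Lemma Fo_div (w : K) : inH d w -> divx i0 s (fun c => (p' w).[c i0] - Hf (c i0) (ych w c)).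
Proof.
move=> h.
have wL : w \in L by rewrite hL; apply/eqP.
have pp : forall mu : K, polyfn (fun c : 'I_3 -> K => (p' mu).[c i0]).
  by move=> mu; apply: pf_horner; apply: pf_var.
have d1 := divx_mull (divx_Gw h) (pp w).
have d2 : divx i0 s (fun c => \sum_(mu <- L | mu != w) (p' mu).[c i0] * Gz mu (c i0) (ych w c)).
  apply: divx_sum => mu muL ne.
  by apply: divx_mull (divx_Gother (inL muL) h ne) (pp mu).
apply: divx_ext (divx_add d1 (divx_opp d2)) _.
move=> c; rewrite /Hf (bigD1_seq w) //=; ring.
Qed.

Lemma upd2_0 (c : 'I_3 -> K) t : upd c i2 t i0 = c i0.
Proof. by rewrite /upd (negbTE i02). Qed.
Lemma upd2_1 (c : 'I_3 -> K) t : upd c i2 t i1 = c i1.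
Proof. by rewrite /upd (negbTE i12). Qed.

Lemma Fo_ex : exists Fo : K -> ('I_3 -> K) -> K, forall w, inH d w ->
  [/\ polyfn (Fo w),
      (forall c, (p' w).[c i0] - Hf (c i0) (ych w c) = c i0 ^+ s * Fo w c) &
      (forall c c', c i0 = c' i0 -> c i1 = c' i1 -> Fo w c = Fo w c')].
Proof.
have : forall w : K, exists g : ('I_3 -> K) -> K, inH d w -> polyfn g /\
    forall c, (p' w).[c i0] - Hf (c i0) (ych w c) = c i0 ^+ s * g c.
  move=> w; case: (eqVneq (w ^+ d) 1) => h.
    by case: (Fo_div h) => g [pg hg]; exists g.
  by exists (fun _ => 0) => h'; move: h; rewrite h' eqxx.
case/choice_fun => g hg.
exists (fun w c => g w (upd c i2 0)) => w h; have [pg eg] := hg w h; split.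
- apply: (pf_comp (f := g w) (h := fun i c => upd c i2 0 i)) => // i.
  by rewrite /upd; case: (i == i2); [apply: pf_const|apply: pf_var].
- move=> c; have := eg (upd c i2 0); rewrite upd2_0 => <-; congr (_ - Hf _ _).
  by rewrite /ych upd2_0 upd2_1.
- move=> c c' e0 e1; congr (g w _); apply: funext => i.
  by case: (ord3 i) => ->; rewrite ?upd2_0 ?upd2_1 ?e0 ?e1 // /upd eqxx.
Qed.

Section WithFo.
Variable Fo : K -> ('I_3 -> K) -> K.
Hypothesis hFo : forall w, inH d w ->
  [/\ polyfn (Fo w),
      (forall c, (p' w).[c i0] - Hf (c i0) (ych w c) = c i0 ^+ s * Fo w c) &
      (forall c c', c i0 = c' i0 -> c i1 = c' i1 -> Fo w c = Fo w c')].

Lemma cancelB (x y : K) : x != 0 -> x * y / x = y.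
Proof. by move=> h; rewrite mulrAC divff // mul1r. Qed.

Definition PhiF (w : K) (c : 'I_3 -> K) : 'I_4 -> K :=
  mk4 (c i0) (ych w c) (zch w c) (c i2 + Fo w c).

Lemma XA1ptE (y : 'I_4 -> K) : XA1pt d r a y <-> y j0 ^+ r * y j2 + F (y j0) (y j1) = 1.
Proof. by []. Qed.

Lemma Phi_lands (w : K) c : inH d w -> XA1pt d r a (PhiF w c).
Proof. by move=> h; apply/XA1ptE; rewrite /PhiF mk4_0 mk4_1 mk4_2 K2. Qed.

Lemma FoE (w : K) c : inH d w -> c i0 != 0 ->
  Fo w c = ((p' w).[c i0] - Hf (c i0) (ych w c)) / c i0 ^+ s.
Proof.
move=> h x0; have [_ e _] := hFo h.
by rewrite e cancelB // expf_neq0.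
Qed.

Lemma Fo_ind (w : K) c c' : inH d w -> c i0 = c' i0 -> c i1 = c' i1 -> Fo w c = Fo w c'.
Proof. by move=> h; have [_ _ e] := hFo h; apply: e. Qed.

Lemma WrelE (o l : K) c c' : Wrel r s p p' o c l c' <->
  (o = l /\ forall i, c i = c' i) \/
  [/\ c i0 != 0, c' i0 = c i0,
      c' i1 = c i1 + ((p o).[c i0] - (p l).[c i0]) / c i0 ^+ r &
      c' i2 = c i2 + ((p' o).[c i0] - (p' l).[c i0]) / c i0 ^+ s].
Proof. by []. Qed.

Lemma INJ (o l : K) c c' : inH d o -> inH d l -> PhiF o c = PhiF l c' ->
  Wrel r s p p' o c l c'.
Proof.
move=> ho hl E; apply/WrelE.
have := congr1 (fun v => v j0) E; rewrite /PhiF !mk4_0 => e0.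
have := congr1 (fun v => v j1) E; rewrite /PhiF !mk4_1 => e1.
have := congr1 (fun v => v j2) E; rewrite /PhiF !mk4_2 => e2.
have := congr1 (fun v => v j3) E; rewrite /PhiF !mk4_3 => e3.
case: (eqVneq (c i0) 0) => x0.
- left; have x0' : c' i0 = 0 by rewrite -e0.
  have ol : o = l by rewrite -(ych0 ho x0) -(ych0 hl x0').
  subst l; split => //.
  have e11 : c i1 = c' i1.
    move: e2; rewrite /zch e1 -e0 (ych0 ho x0') x0 => /addrI /eqP.
    by rewrite eqr_opp (inj_eq (mulIf (Qfww_nz ho))) => /eqP.
  have e22 : c i2 = c' i2.
    by move: e3; rewrite (Fo_ind ho e0 e11) => /addIr.
  by move=> i; case: (ord3 i) => ->.
- right; split; [by []|by rewrite e0| |].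
  + have xr : c i0 ^+ r != 0 by rewrite expf_neq0.
    move: e1; rewrite /ych -e0 => e1.
    have -> : c' i1 = ((p o).[c i0] + c i0 ^+ r * c i1 - (p l).[c i0]) / c i0 ^+ r.
      by rewrite e1 addrAC subrr add0r cancelB.
    by field.
  + have xs : c i0 ^+ s != 0 by rewrite expf_neq0.
    have -> : c' i2 = c i2 + Fo o c - Fo l c' by rewrite e3 addrK.
    by rewrite (FoE ho x0) (FoE hl) -?e0 // -e1; field.
Qed.

Lemma Compat (o l : K) c c' : inH d o -> inH d l -> Wrel r s p p' o c l c' ->
  PhiF o c = PhiF l c'.
Proof.
move=> ho hl /WrelE [[<- H]|[x0 e0 e1 e2]].
  by congr PhiF; apply: funext.
have xr : c i0 ^+ r != 0 by rewrite expf_neq0.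
have xs : c i0 ^+ s != 0 by rewrite expf_neq0.
have ey : ych l c' = ych o c by rewrite /ych e0 e1; field.
have ez : zch l c' = zch o c.
  have h1 := K2 c ho; have h2 := K2 c' hl.
  rewrite e0 ey -h1 in h2; move/addIr: h2; exact: mulfI.
have et : c' i2 + Fo l c' = c i2 + Fo o c.
  by rewrite e2 (FoE ho x0) (FoE hl) ?e0 // ey; field.
by rewrite /PhiF e0 ey ez et.
Qed.

Definition PsiF (w : K) (c : 'I_3 -> K) : 'I_3 -> K :=
  mk3 (c i0) (c i1) (c i2 - Fo w c).

Lemma psi_ok (w : K) (y : 'I_4 -> K) c1 : inH d w -> XA1pt d r a y ->
  (p w).[y j0] + y j0 ^+ r * c1 = y j1 ->
  (q w).[y j0] - c1 * Qf w (y j0) (y j1) = y j2 ->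
  PhiF w (PsiF w (mk3 (y j0) c1 (y j3))) = y.
Proof.
move=> h _ e1 e2; rewrite [RHS]mk4_eta /PhiF /PsiF.
have ey : ych w (mk3 (mk3 (y j0) c1 (y j3) i0) (mk3 (y j0) c1 (y j3) i1)
   (mk3 (y j0) c1 (y j3) i2 - Fo w (mk3 (y j0) c1 (y j3)))) = y j1.
  by rewrite /ych !mk3_0 !mk3_1.
congr mk4; first by rewrite !mk3_0.
- exact: ey.
- by rewrite /zch ey !mk3_0 !mk3_1.
- rewrite !mk3_2 [X in _ + X = _](Fo_ind (c' := mk3 (y j0) c1 (y j3))) ?subrK //.
    by rewrite !mk3_0.
  by rewrite !mk3_1.
Qed.


Lemma chart (w : K) (B : ('I_4 -> K) -> K) (N : 'I_3 -> ('I_4 -> K) -> K) :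
  inH d w -> polyfn B -> (forall i, polyfn (N i)) ->
  (forall y, XA1pt d r a y -> B y != 0 ->
     [/\ N i0 y / B y = y j0, N i2 y / B y = y j3,
         (p w).[y j0] + y j0 ^+ r * (N i1 y / B y) = y j1 &
         (q w).[y j0] - (N i1 y / B y) * Qf w (y j0) (y j1) = y j2]) ->
  exists (g : expr K 4) (Nj : 'I_3 -> expr K 4),
    (forall y, (eval g y != 0) = (B y != 0)) /\
    forall y, XA1pt d r a y -> eval g y != 0 ->
      PhiF w (fun i => eval (Nj i) y / eval g y) = y.
Proof.
move=> h pB pN hB.
have [pF _ _] := hFo h.
have : forall i : 'I_3, exists MN : nat * (('I_4 -> K) -> K), polyfn MN.2 /\
   forall y, B y != 0 -> MN.2 y = B y ^+ MN.1 * PsiF w (fun i => N i y / B y) i.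
  move=> i.
  have pf : polyfn (fun c => PsiF w c i).
    case: (ord3 i) => ->.
    - by apply: (pf_ext (pf_var _ i0)) => c; rewrite /PsiF mk3_0.
    - by apply: (pf_ext (pf_var _ i1)) => c; rewrite /PsiF mk3_1.
    - by apply: (pf_ext (pf_sub (pf_var _ i2) pF)) => c; rewrite /PsiF mk3_2.
  have [M [Nf [pNf hNf]]] := pf_homog pf pB pN.
  by exists (M, Nf).
case/fin_all_exists => MN hMN.
pose M := (\max_i (MN i).1).+1.
have leM : forall i, ((MN i).1 <= M)%N.
  by move=> i; apply: leqW; exact: (@leq_bigmax _ (fun i => (MN i).1) i).
have [eg heg] : polyfn (fun y => B y ^+ M) by apply: pf_exp.
have : forall i, exists e : expr K 4, forall y,
    eval e y = (MN i).2 y * B y ^+ (M - (MN i).1).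
  move=> i; have [pi _] := hMN i.
  by case: (pf_mul pi (pf_exp (M - (MN i).1) pB)) => e he; exists e.
case/fin_all_exists => Nj hNj.
exists eg, Nj; split.
  by move=> y; rewrite heg expf_eq0.
move=> y hy; rewrite heg expf_eq0 /= => By.
have [f0 f2 f1 f1'] := hB y hy By.
rewrite -[RHS](psi_ok h hy f1 f1'); congr PhiF; apply: funext => i.
rewrite hNj; have [_ ->] := hMN i; last by [].
rewrite [_ * B y ^+ (M - _)]mulrAC -exprD subnKC // cancelB ?expf_neq0 //.
congr PsiF; rewrite [LHS]mk3_eta; by congr mk3.
Qed.

Lemma chart_j (j : 'I_(size L).+1) : exists T : K * expr K 4 * ('I_3 -> expr K 4),
  [/\ inH d T.1.1,
      forall y, (eval T.1.2 y != 0) =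
        (if (j < size L)%N then Qf (nth 0 L j) (y j0) (y j1) != 0 else y j0 != 0) &
      forall y, XA1pt d r a y -> eval T.1.2 y != 0 ->
        PhiF T.1.1 (fun i => eval (T.2 i) y / eval T.1.2 y) = y].
Proof.
case: ltnP => hj.
- set l := nth 0 L j.
  have hl : inH d l by apply: inL; apply: mem_nth.
  pose B := fun y : 'I_4 -> K => Qf l (y j0) (y j1).
  pose N := fun (i : 'I_3) (y : 'I_4 -> K) =>
    mk3 (y j0 * B y) ((q l).[y j0] - y j2) (y j3 * B y) i.
  have pB : polyfn B by apply: pf_Qf; apply: pf_var.
  have pN : forall i, polyfn (N i).
    move=> i; case: (ord3 i) => ->.
    + by apply: (pf_ext (pf_mul (pf_var _ j0) pB)) => y; rewrite /N mk3_0.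
    + by apply: (pf_ext (pf_sub (pf_horner (q l) (pf_var _ j0)) (pf_var _ j2))) => y;
        rewrite /N mk3_1.
    + by apply: (pf_ext (pf_mul (pf_var _ j3) pB)) => y; rewrite /N mk3_2.
  have [] := chart hl pB pN.
    move=> y /XA1ptE hy By; rewrite /N mk3_0 mk3_1 mk3_2.
    split; [by rewrite mulfK|by rewrite mulfK| |by rewrite divfK // subKr].
    have hY : F (y j0) (y j1) = 1 - y j0 ^+ r * y j2 by rewrite -hy; ring.
    have kk : y j0 ^+ r * ((q l).[y j0] - y j2) = (y j1 - (p l).[y j0]) * B y.
      by rewrite /B K1 mulrBr hq // hY; ring.
    by rewrite mulrA kk mulfK // addrC subrK.
  by move=> g [Nj [hg hN]]; exists (l, g, Nj); split => // y.
- have h1 : inH d (1 : K) by rewrite /inH expr1n.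
  pose B := fun y : 'I_4 -> K => y j0 ^+ r.
  pose N := fun (i : 'I_3) (y : 'I_4 -> K) =>
    mk3 (y j0 * B y) (y j1 - (p 1).[y j0]) (y j3 * B y) i.
  have pB : polyfn B by apply: pf_exp; apply: pf_var.
  have pN : forall i, polyfn (N i).
    move=> i; case: (ord3 i) => ->.
    + by apply: (pf_ext (pf_mul (pf_var _ j0) pB)) => y; rewrite /N mk3_0.
    + by apply: (pf_ext (pf_sub (pf_var _ j1) (pf_horner (p 1) (pf_var _ j0)))) => y;
        rewrite /N mk3_1.
    + by apply: (pf_ext (pf_mul (pf_var _ j3) pB)) => y; rewrite /N mk3_2.
  have [] := chart h1 pB pN.
    move=> y /XA1ptE hy By; rewrite /N mk3_0 mk3_1 mk3_2.
    have e3 : (p 1).[y j0] + y j0 ^+ r * ((y j1 - (p 1).[y j0]) / B y) = y j1.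
      by rewrite [_ * (_ / _)]mulrC divfK // addrC subrK.
    split; [by rewrite mulfK|by rewrite mulfK|exact: e3|].
    set c1 := (y j1 - _) / _.
    have k2 := K2 (mk3 (y j0) c1 0) h1.
    have ey : ych 1 (mk3 (y j0) c1 0) = y j1 by rewrite /ych mk3_0 mk3_1.
    have e := etrans k2 (esym hy); rewrite ey !mk3_0 in e; have e2 := mulfI By (addIr _ e); move: e2; rewrite /zch mk3_0 mk3_1 ey.
    by apply.
  move=> g [Nj [hg hN]]; exists (1, g, Nj); split => // y.
  by rewrite /= hg /B expf_eq0 hr.
Qed.

Lemma W_iso_main : W_iso d r s p p' (XA1pt d r a).
Proof.
have [PhiE hPhiE] : exists PhiE : K -> 'I_4 -> expr K 3, forall o, inH d o ->
    forall c i, eval (PhiE o i) c = PhiF o c i.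
  apply: (@choice_fun K ('I_4 -> expr K 3) (fun o E => inH d o -> forall c i, eval (E i) c = PhiF o c i)) => o.
  case: (eqVneq (o ^+ d) 1) => ho; last first.
    by exists (fun _ => EC 3 0) => h; move: ho; rewrite h eqxx.
  have [pF _ _] := hFo ho.
  have : forall i : 'I_4, exists e : expr K 3, forall c, eval e c = PhiF o c i.
    move=> i; case: (ord4 i) => ->.
    + by case: (pf_var K i0) => e he; exists e => c; rewrite he /PhiF mk4_0.
    + case: (pf_ych o) => e he; exists e => c; rewrite he /PhiF mk4_1 //.
    + case: (pf_zch o) => e he; exists e => c; rewrite he /PhiF mk4_2 //.
    + by case: (pf_add (pf_var K i2) pF) => e he; exists e => c; rewrite he /PhiF mk4_3.
  by case/fin_all_exists => E hE; exists E => _.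
have [T hT] := choice_fun chart_j.
have evP : forall o c, inH d o -> evalv (fun i => tomp (PhiE o i)) c = PhiF o c.
  by move=> o c ho; apply: funext => i; rewrite /evalv tompE hPhiE.
have psiE : forall j y, (fun i => (tomp ((T j).2 i)).@[y] / (tomp (T j).1.2).@[y]) =
    (fun i => eval ((T j).2 i) y / eval (T j).1.2 y).
  by move=> j y; apply: funext => i; rewrite !tompE.
exists (fun o i => tomp (PhiE o i)), (size L).+1, (fun j => tomp (T j).1.2),
  (fun j => (T j).1.1), (fun j i => tomp ((T j).2 i)).
rewrite /=.
have key : forall j y, XA1pt d r a y -> (tomp (T j).1.2).@[y] != 0 ->
    PhiF (T j).1.1 (fun i => (tomp ((T j).2 i)).@[y] / (tomp (T j).1.2).@[y]) = y.
  move=> j y hy g0; rewrite psiE; have [_ _ H] := hT j; apply: H => //; by rewrite -tompE.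
split; [|split; [|split; [|split; [|split; [|split]]]]].
- by move=> o c ho; rewrite evP //; apply: Phi_lands.
- by move=> o l c c' ho hl hW; rewrite !evP //; apply: Compat.
- by move=> j; have [] := hT j.
- move=> y hy; case: (eqVneq (y j0) 0) => x0.
    have Yd : y j1 ^+ d = 1.
      by move/XA1ptE: hy; rewrite x0 F0 expr0n; case: r hr => // ? _; rewrite mul0r add0r.
    have YL : y j1 \in L by rewrite hL Yd.
    have hi : (index (y j1) L < (size L).+1)%N by rewrite ltnS index_size.
    exists (inord (index (y j1) L)); rewrite tompE; have [_ -> _] := hT (inord (index (y j1) L)).
    rewrite inordK // index_mem YL nth_index // x0.
    by apply: Qfww_nz.
  exists ord_max; rewrite tompE; have [_ -> _] := hT ord_max.
  by rewrite ltnn.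
- move=> y j j' hy gj gj'; apply: INJ.
  + by have [] := hT j.
  + by have [] := hT j'.
  by rewrite (key j y hy gj) (key j' y hy gj').
- by move=> y j hy gj; rewrite evP ?key //; have [] := hT j.
- move=> o c j ho; rewrite evP // => gj; apply: INJ => //.
    by have [] := hT j.
  by rewrite key //; apply: Phi_lands.
Qed.

End WithFo.

End Main.

Section Swap.
Variable K : fieldType.

Definition sw (i : 'I_3) : 'I_3 := if i == i1 then i2 else if i == i2 then i1 else i.
Lemma i01 : i0 != i1. Proof. by rewrite -val_eqE /= !inordK. Qed.
Lemma sw0 : sw i0 = i0.
Proof. by rewrite /sw (negbTE i01) (negbTE i02). Qed.
Lemma sw1 : sw i1 = i2. Proof. by rewrite /sw eqxx. Qed.
Lemma sw2 : sw i2 = i1. Proof. by rewrite /sw eq_sym (negbTE i12) eqxx. Qed.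
Lemma swK i : sw (sw i) = i.
Proof. by case: (ord3 i) => ->; rewrite ?sw0 ?sw1 ?sw2 ?sw1. Qed.

Lemma Wrel_sw r s (p p' : K -> {poly K}) o c l c' :
  Wrel s r p' p o c l c' -> Wrel r s p p' o (fun i => c (sw i)) l (fun i => c' (sw i)).
Proof.
move/WrelE => H; apply/WrelE; rewrite !sw0 !sw1 !sw2.
case: H => [[ol H]|[x0 e0 e1 e2]]; first by left; split => // i.
by right; split.
Qed.

Lemma W_iso_sw d r s (p p' : K -> {poly K}) Y : W_iso d s r p' p Y -> W_iso d r s p p' Y.
Proof.
case=> Phi [J [g [w [N /= [h1 [h2 [h3 [h4 [h5 [h6 h7]]]]]]]]]].
pose swt := [tuple ('X_(sw i) : {mpoly K[3]}) | i < 3].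
have evs : forall o c, evalv (fun i => Phi o i \mPo swt) c = evalv (Phi o) (fun i => c (sw i)).
  move=> o c; apply: functional_extensionality => i; rewrite /evalv comp_mpoly_meval.
  by apply: meval_eq => j; rewrite tnth_mktuple mevalXU.
have swc : forall c : 'I_3 -> K, (fun i => (fun i => c (sw i)) (sw i)) = c.
  by move=> c; apply: functional_extensionality => i; rewrite swK.
exists (fun o i => Phi o i \mPo swt), J, g, w, (fun j i => N j (sw i)) => /=.
split; [|split; [|split; [|split; [|split; [|split]]]]].
- by move=> o c ho; rewrite evs; apply: h1.
- move=> o l c c' ho hl hW; rewrite !evs; apply: h2 => //.
  exact: Wrel_sw.
- exact: h3.
- exact: h4.
- move=> y j j' hy g1 g2.
  exact: (Wrel_sw (h5 y j j' hy g1 g2)).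
- by move=> y j hy gj; rewrite evs (swc (fun i => (N j i).@[y] / (g j).@[y])); apply: h6.
- move=> o c j ho; rewrite evs => gj.
  have := Wrel_sw (h7 o _ j ho gj); by rewrite swc.
Qed.
End Swap.

Lemma main_dir (k : closedFieldType) (char0 : [pchar k] =i pred0)
    (d r s : nat) (hd : (2 <= d)%N) (hr : (1 <= r)%N) (hs : (1 <= s)%N)
    (a : nat -> k) (p p' : k -> {poly k})
    (hp : forall w : k, inH d w -> pspec d r a w (p w)) :
  W_iso d r s p p' (XA1pt d r a).
Proof.
have [rs hrs] := closed_field_poly_normal ('X^d - 1%:P : {poly k}).
have nz : ('X^d - 1%:P : {poly k}) != 0.
  apply/eqP => /(congr1 (fun P => P.[0])) /eqP.
  by rewrite !hornerE expr0n (gtn_eqF (ltnW hd)) /= sub0r oppr_eq0 oner_eq0.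
have hL : forall w, (w \in undup rs) = (w ^+ d == 1).
  move=> w; rewrite mem_undup -root_prod_XsubC -(rootZ _ _ (a := lead_coef ('X^d - 1%:P))).
    by rewrite -hrs /root !hornerE subr_eq0.
  by rewrite lead_coef_eq0.
have hp0 : forall w, inH d w -> (p w).[0] = w by move=> w /hp [].
have [q hq] : exists q : k -> {poly k}, forall w, inH d w -> forall x,
    x ^+ r * (q w).[x] = 1 - binform d a x (p w).[x].
  apply: (@choice_fun k {poly k} (fun w qq => inH d w -> forall x,
    x ^+ r * qq.[x] = 1 - binform d a x (p w).[x])) => w.
  case: (eqVneq (w ^+ d) 1) => hw; last first.
    by exists 0 => h; move: hw; rewrite h eqxx.
  have [_ _ /dvdpP [qq E]] := hp w hw.
  exists qq => _ x; have := congr1 (fun P => P.[x]) E.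
  rewrite hornerM hornerXn mulrC => <-.
  rewrite /binform hornerD hornerN hornerC hornerD horner_exp horner_sum.
  congr (1 - (_ + _)); apply: eq_bigr => i _.
  by rewrite hornerZ hornerM hornerXn horner_exp mulrA.
have [Fo hFo] := Fo_ex char0 s hd hr p' (undup_uniq rs) hL hp0 hq.
exact: (@W_iso_main _ char0 d r s hd hr a p p' q (undup rs) hL hp0 hq Fo hFo).
Qed.

Unset Implicit Arguments.

Theorem theorem1p4p23 (k : closedFieldType) (char0 : [pchar k] =i pred0)
    (d r s : nat) (hd : (2 <= d)%N) (hr : (1 <= r)%N) (hs : (1 <= s)%N)
    (a a' : nat -> k) (p p' : k -> {poly k})
    (hp : forall w : k, inH d w -> pspec d r a w (p w))
    (hp' : forall w : k, inH d w -> pspec d s a' w (p' w)) :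
  W_iso d r s p p' (XA1pt d r a) /\ W_iso d r s p p' (XA1pt d s a').
Proof.
split; first exact: (@main_dir k char0 d r s hd hr hs a p p' hp).
apply: W_iso_sw; exact: (@main_dir k char0 d s r hd hs hr a' p' p hp').
Qed.
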